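(* Let $L>1$ be a real number that is not an integer and let $T>0$. The following are equivalent: (i) there exists a continuous function $f:[0,T]\to\mathbb{R}$ with $f(0)=0$ and $f(T)=L$ such that there are no $s,t\in[0,T]$ with $t-s=T/L$ and $f(t)-f(s)=1$; (ii) there exists a continuous function $g:[0,L]\to\mathbb{R}$ with $g(0)=g(L)=0$ such that there is no $x\in[0,L-1]$ with $g(x)=g(x+1)$.
   Context: Statement (i) expresses that a race of length $L$ completed in time $T$ has a position function with no one-unit portion covered at exactly the average pace; statement (ii) expresses that some function on $[0,L]$ vanishing at both endpoints has no horizontal chord of length $1$. *)

(* Defs.v *)
From Stdlib Require Import Reals.
Open Scope R_scope.

Definition continuous_on_Icc (f : R -> R) (a b : R) : Prop :=
  forall x, a <= x <= b ->
    forall eps, 0 < eps -> exists delta, 0 < delta /\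
      forall y, a <= y <= b -> Rabs (y - x) < delta -> Rabs (f y - f x) < eps.

(* Main.v *)
Require Import Defs.
From Stdlib Require Import Reals Lra.
Open Scope R_scope.

Lemma cont_affine (h : R -> R) (a b c : R) :
  0 < a -> continuous_on_Icc h 0 (a * c) ->
  continuous_on_Icc (fun x => h (a * x) + b * x) 0 c.
Proof.
  intros Ha Hh x Hx eps Heps.
  assert (Hax : 0 <= a * x <= a * c) by (split; nra).
  destruct (Hh (a*x) Hax (eps/2) ltac:(lra)) as [d1 [Hd1 Hd]].
  assert (Hb : 0 < Rabs b + 1) by (pose proof (Rabs_pos b); lra).
  exists (Rmin (d1 / a) (eps / 2 / (Rabs b + 1))).
  split.
  - apply Rmin_pos; apply Rdiv_lt_0_compat; lra.
  - intros y Hy Hyx.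
    assert (H1 : Rabs (y - x) < d1 / a) by (eapply Rlt_le_trans; [exact Hyx| apply Rmin_l]).
    assert (H2 : Rabs (y - x) < eps / 2 / (Rabs b + 1)) by (eapply Rlt_le_trans; [exact Hyx| apply Rmin_r]).
    assert (Hay : 0 <= a * y <= a * c) by (split; nra).
    assert (H3 : Rabs (a*y - a*x) < d1).
    { replace (a*y - a*x) with (a*(y-x)) by ring. rewrite Rabs_mult, (Rabs_pos_eq a) by lra.
      apply (Rmult_lt_compat_l a) in H1; [|lra]. replace (a*(d1/a)) with d1 in H1 by (field; lra). exact H1. }
    specialize (Hd _ Hay H3).
    assert (H4 : Rabs (b*y - b*x) < eps/2).
    { replace (b*y - b*x) with (b*(y-x)) by ring. rewrite Rabs_mult.
      pose proof (Rabs_pos (y-x)). pose proof (Rabs_pos b).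
      apply (Rmult_lt_compat_l (Rabs b + 1)) in H2; [|lra].
      replace ((Rabs b + 1) * (eps / 2 / (Rabs b + 1))) with (eps/2) in H2 by (field; lra).
      nra. }
    replace (h (a*y) + b*y - (h (a*x) + b*x)) with ((h (a*y) - h (a*x)) + (b*y - b*x)) by ring.
    eapply Rle_lt_trans; [apply Rabs_triang|]. lra.
Qed.

Theorem lemma1 (L T : R) (hL : 1 < L) (hLnotint : forall n : Z, L <> IZR n)
  (hT : 0 < T) :
  (exists f : R -> R, continuous_on_Icc f 0 T /\ f 0 = 0 /\ f T = L /\
     ~ (exists s t, 0 <= s <= T /\ 0 <= t <= T /\ t - s = T / L /\ f t - f s = 1))
  <->
  (exists g : R -> R, continuous_on_Icc g 0 L /\ g 0 = 0 /\ g L = 0 /\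
     ~ (exists x, 0 <= x <= L - 1 /\ g x = g (x + 1))).
Proof.
  assert (HTL : 0 < T / L) by (apply Rdiv_lt_0_compat; lra).
  assert (HLT : 0 < L / T) by (apply Rdiv_lt_0_compat; lra).
  split.
  - intros [f [Hc [H0 [HT Hn]]]].
    exists (fun x => f (T/L * x) + (-1) * x). split; [|split; [|split]].
    + apply cont_affine; auto. replace (T/L*L) with T by (field; lra). exact Hc.
    + rewrite Rmult_0_r, H0. ring.
    + replace (T/L*L) with T by (field; lra). rewrite HT. ring.
    + intros [x [Hx Heq]]. apply Hn. exists (T/L*x), (T/L*(x+1)).
      assert (T/L * (L-1) + T/L = T) by (field; lra).
      split; [split; nra|]. split; [split; nra|]. split; [ring|]. lra.
  - intros [g [Hc [H0 [HL Hn]]]].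
    exists (fun t => g (L/T * t) + L/T * t). split; [|split; [|split]].
    + apply cont_affine; auto. replace (L/T*T) with L by (field; lra). exact Hc.
    + rewrite Rmult_0_r, H0. ring.
    + replace (L/T*T) with L by (field; lra). rewrite HL. ring.
    + intros [s [t [Hs [Ht [Hts Heq]]]]]. apply Hn. exists (L/T*s).
      assert (Et : L/T*t = L/T*s + 1).
      { replace t with (s + T/L) by lra. field; split; lra. }
      rewrite Et in Heq.
      assert (L/T*t <= L/T*T) by nra.
      replace (L/T*T) with L in H by (field; lra).
      split; [split; nra|]. lra.
Qed.
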